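(* If the OWA weights satisfy $v_1>0$, then \textsc{Min-Owa}~$1|prec|\max w_jT_j$ is approximable within $1/v_1$.
   Context: Single machine scheduling under scenarios. A set of jobs $J=\{1,\dots,n\}$ must be processed nonpreemptively on one machine, all jobs being available at time $0$; jobs may be subject to precedence constraints given by a partial order ($i\rightarrow j$ means job $j$ cannot start before job $i$ is completed). A schedule is a permutation $\pi$ of $J$ respecting the precedence constraints; $\Pi$ denotes the set of all schedules. A scenario set $\Gamma=\{S_1,\dots,S_K\}$, $K>1$, is given (part of the input); under scenario $S_i$ job $j$ has a nonnegative processing time $p_j(S_i)$, nonnegative due date $d_j(S_i)$ and nonnegative weight $w_j(S_i)$. $C_j(\pi,S_i)$ is the completion time of $j$ in $\pi$ under $S_i$, i.e. the sum of $p_k(S_i)$ over $k=j$ and all jobs $k$ preceding $j$ in $\pi$. The cost of $\pi$ under $S_i$ is $f(\pi,S_i)=\max_{j\in J} w_j(S_i)[C_j(\pi,S_i)-d_j(S_i)]^+$, where $[x]^+=\max\{0,x\}$. OWA criterion: given weights $\pmb v=(v_1,\dots,v_K)$ with $v_i\in[0,1]$ and $\sum_i v_i=1$, and reals $f_1,\dots,f_K$, let $\sigma$ be a permutation of $[K]$ with $f_{\sigma(1)}\ge\dots\ge f_{\sigma(K)}$ and set $\mathrm{owa}_{\pmb v}(f_1,\dots,f_K)=\sum_{i\in[K]}v_if_{\sigma(i)}$. Set $\mathrm{OWA}(\pi)=\mathrm{owa}_{\pmb v}(f(\pi,S_1),\dots,f(\pi,S_K))$; \textsc{Min-Owa}~$1|prec|\max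 w_jT_j$ is $\min_{\pi\in\Pi}\mathrm{OWA}(\pi)$. A problem is approximable within $\rho$ if a polynomial-time algorithm returns a schedule $\pi$ with $\mathrm{OWA}(\pi)\le\rho\cdot\min_{\sigma\in\Pi}\mathrm{OWA}(\sigma)$. *)

(* Defs.v *)
From HB Require Import structures.
From mathcomp Require Import all_boot all_order all_algebra.
Set Implicit Arguments. Unset Strict Implicit. Unset Printing Implicit Defensive.
Import Order.TTheory GRing.Theory Num.Theory.
Local Open Scope ring_scope.

Section Sched.
Variables (R : realFieldType) (n K : nat).

(* precedence i -> j : job j cannot start before job i is completed *)
Definition strict_partial_order (prec : rel 'I_n) : Prop :=
  irreflexive prec /\ transitive prec.

Definition is_schedule (prec : rel 'I_n) (s : seq 'I_n) : Prop :=
  perm_eq s (enum 'I_n) /\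
  forall i j : 'I_n, prec i j -> (index i s < index j s)%N.

Definition pos (x : R) : R := Num.max 0 x.

Definition completion (p : 'I_K -> 'I_n -> R) (s : seq 'I_n) (S : 'I_K)
  (j : 'I_n) : R :=
  \sum_(k <- take (index j s).+1 s) p S k.

Definition cost (p d w : 'I_K -> 'I_n -> R) (s : seq 'I_n) (S : 'I_K) : R :=
  \big[Num.max/0]_(j < n) (w S j * pos (completion p s S j - d S j)).

Definition owa (v : 'I_K -> R) (f : 'I_K -> R) : R :=
  let sf := sort (fun x y : R => y <= x) [seq f k | k <- enum 'I_K] in
  \sum_(i < K) v i * nth 0 sf i.

Definition OWA (v : 'I_K -> R) (p d w : 'I_K -> 'I_n -> R) (s : seq 'I_n) : R :=
  owa v (cost p d w s).

Definition first_weight (v : 'I_K -> R) : R := nth 0 [seq v i | i <- enum 'I_K] 0.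

(* ---- The polynomial-time algorithm: backward Lawler rule for the min-max
   criterion.  Repeatedly, among the unscheduled jobs without unscheduled
   successors, put last the job j minimizing
   max_i w_j(S_i) [P(S_i) - d_j(S_i)]^+, P(S_i) = total processing time of
   the unscheduled jobs under S_i. ---- *)

Definition argmin_seq (g : 'I_n -> R) (x0 : 'I_n) (s : seq 'I_n) : 'I_n :=
  foldl (fun b x => if g x < g b then x else b) x0 s.

Definition last_cost (p d w : 'I_K -> 'I_n -> R) (U : seq 'I_n) (j : 'I_n) : R :=
  \big[Num.max/0]_(i < K) (w i j * pos ((\sum_(k <- U) p i k) - d i j)).

Fixpoint lawler_aux (prec : rel 'I_n) (p d w : 'I_K -> 'I_n -> R)
  (fuel : nat) (U : seq 'I_n) : seq 'I_n :=
  match fuel with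
  | 0%N => U
  | fuel'.+1 =>
    match [seq j <- U | all (fun k => ~~ prec j k) U] with
    | [::] => U
    | c :: cs =>
      let j := argmin_seq (last_cost p d w U) c cs in
      rcons (lawler_aux prec p d w fuel' (rem j U)) j
    end
  end.

Definition lawler (prec : rel 'I_n) (p d w : 'I_K -> 'I_n -> R) : seq 'I_n :=
  lawler_aux prec p d w n (enum 'I_n).

End Sched.

(* Main.v *)
Require Import Defs.
From HB Require Import structures.
From mathcomp Require Import all_boot all_order all_algebra.
From mathcomp Require Import zify.
Import Order.TTheory GRing.Theory Num.Theory.
Local Open Scope ring_scope.
Set Implicit Arguments. Unset Strict Implicit.

Lemma bmax_ge0 (R : realFieldType) (I : Type) (r : seq I) (P : pred I) (F : I -> R) :
  0 <= \big[Num.max/0]_(x <- r | P x) F x.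
Proof.
elim: r => [|a r IH]; first by rewrite big_nil.
by rewrite big_cons; case: (P a) => //; rewrite le_max IH orbT.
Qed.

Lemma bmax_le (R : realFieldType) (I : eqType) (r : seq I) (P : pred I) (F : I -> R) c :
  0 <= c -> (forall x, x \in r -> P x -> F x <= c) ->
  \big[Num.max/0]_(x <- r | P x) F x <= c.
Proof.
move=> c0; elim: r => [|a r IH] H; first by rewrite big_nil.
rewrite big_cons.
have H' : \big[Num.max/0]_(x <- r | P x) F x <= c.
  by apply: IH => x xr; apply: H; rewrite inE xr orbT.
case Pa: (P a) => //; rewrite ge_max H' andbT; apply: H => //; exact: mem_head.
Qed.

Lemma le_bmax (R : realFieldType) (I : eqType) (r : seq I) (P : pred I) (F : I -> R) c x :
  x \in r -> P x -> c <= F x -> c <= \big[Num.max/0]_(x <- r | P x) F x.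
Proof.
elim: r => [|a r IH] //; rewrite inE => /orP [/eqP-> | xr] Px cF; rewrite big_cons.
  by rewrite Px le_max cF.
case: (P a); last exact: IH.
by rewrite le_max (IH xr Px cF) orbT.
Qed.

Lemma compl_rem (R : realFieldType) (n K : nat) (p : 'I_K -> 'I_n -> R)
  (hp : forall S j, 0 <= p S j) i (s : seq 'I_n) x k :
  k != x -> completion p (rem x s) i k <= completion p s i k.
Proof.
move=> kx; rewrite /completion.
elim: s => [|a s IH] //.
rewrite rem_cons; case: eqP => [ax|/eqP ax].
  subst a; rewrite /= eq_sym (negbTE kx) /= big_cons.
  by rewrite -[X in X <= _]add0r lerD2r hp.
rewrite /=; case: (a =P k) => [ak|ak] /=; first by rewrite !take0.
by rewrite !big_cons lerD2l.
Qed.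

Lemma compl_rcons (R : realFieldType) (n K : nat) (p : 'I_K -> 'I_n -> R)
  i (L : seq 'I_n) j k :
  k \in L -> completion p (rcons L j) i k = completion p L i k.
Proof.
move=> kL; rewrite /completion -cats1 index_cat kL takel_cat //.
by rewrite index_mem.
Qed.

Lemma compl_rcons_last (R : realFieldType) (n K : nat) (p : 'I_K -> 'I_n -> R)
  i (L : seq 'I_n) j :
  j \notin L -> completion p (rcons L j) i j = \sum_(k <- rcons L j) p i k.
Proof.
move=> jL; rewrite /completion -cats1 index_cat (negbTE jL) /= eqxx addn0.
by rewrite take_oversize // size_cat /= addn1.
Qed.

Lemma index_rem_lt (T : eqType) (s : seq T) j a b :
  a != j -> b != j ->
  (index a (rem j s) < index b (rem j s))%N = (index a s < index b s)%N.
Proof.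
move=> aj bj; elim: s => [|x s IH] //.
rewrite rem_cons; case: eqP => [xj|/eqP xj].
  subst x; by rewrite /= (eq_sym j a) (eq_sym j b) (negbTE aj) (negbTE bj).
by rewrite /=; case: (x =P a) => [xa|xa]; case: (x =P b) => [xb|xb].
Qed.

Definition Gv (R : realFieldType) (n K : nat) (p d w : 'I_K -> 'I_n -> R)
  (s : seq 'I_n) (j : 'I_n) : R :=
  \big[Num.max/0]_(i < K) (w i j * pos (completion p s i j - d i j)).

Definition val (R : realFieldType) (n K : nat) (p d w : 'I_K -> 'I_n -> R)
  (s : seq 'I_n) : R :=
  \big[Num.max/0]_(j <- s) Gv p d w s j.

Definition valid (n : nat) (prec : rel 'I_n) (U s : seq 'I_n) : Prop :=
  perm_eq s U /\
  forall a b, a \in U -> b \in U -> prec a b -> (index a s < index b s)%N.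

Lemma f_mono (R : realFieldType) (w0 d0 x y : R) :
  0 <= w0 -> x <= y -> w0 * pos (x - d0) <= w0 * pos (y - d0).
Proof.
move=> w00 xy; apply: ler_wpM2l => //; rewrite /pos ge_max.
by rewrite le_max lexx /= le_max (lerD2r (- d0)) xy orbT.
Qed.

Lemma val_rem (R : realFieldType) (n K : nat) (p d w : 'I_K -> 'I_n -> R)
  (hp : forall S j, 0 <= p S j) (hw : forall S j, 0 <= w S j)
  (s : seq 'I_n) j :
  uniq s -> val p d w (rem j s) <= val p d w s.
Proof.
move=> us; apply: bmax_le; first exact: bmax_ge0.
move=> x; rewrite mem_rem_uniq // inE => /andP [xj xs] _.
apply: (le_bmax xs) => //.
apply: bmax_le; first exact: bmax_ge0.
move=> i _ _; apply: (le_bmax (mem_index_enum i)) => //.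
by apply: f_mono => //; apply: compl_rem.
Qed.

Lemma val_rcons (R : realFieldType) (n K : nat) (p d w : 'I_K -> 'I_n -> R)
  (L : seq 'I_n) j c :
  j \notin L -> val p d w L <= c ->
  \big[Num.max/0]_(i < K) (w i j * pos ((\sum_(k <- rcons L j) p i k) - d i j)) <= c ->
  val p d w (rcons L j) <= c.
Proof.
move=> jL hL hj; apply: bmax_le; first exact: le_trans (bmax_ge0 _ _ _) hL.
move=> x; rewrite mem_rcons inE => /orP [/eqP -> | xL] _.
  rewrite /Gv; under eq_bigr => i _ do rewrite compl_rcons_last //.
  exact: hj.
apply: le_trans hL; apply: (le_bmax xL) => //.
rewrite /Gv; under eq_bigr => i _ do rewrite compl_rcons //.
exact: lexx.
Qed.

Lemma argmin_seqP (R : realFieldType) (n : nat) (g : 'I_n -> R) x0 s :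
  argmin_seq g x0 s \in x0 :: s /\
  forall y, y \in x0 :: s -> g (argmin_seq g x0 s) <= g y.
Proof.
elim: s x0 => [|a s IH] x0.
  by split; [exact: mem_head | move=> y; rewrite inE => /eqP ->].
rewrite /argmin_seq /=; set b := (if g a < g x0 then a else x0).
have [Hm Hle] := IH b; rewrite -/(argmin_seq g b s); split.
  move: Hm; rewrite inE => /orP [/eqP -> | h]; last by rewrite !inE h !orbT.
  by rewrite /b; case: ifP => _; rewrite !inE eqxx ?orbT.
have gb : g b <= g a /\ g b <= g x0.
  rewrite /b; case: ltP => h; split => //; exact: ltW.
move=> y; rewrite !inE => /or3P [/eqP-> | /eqP-> | ys].
- apply: le_trans (proj2 gb); apply: Hle; exact: mem_head.
- apply: le_trans (proj1 gb); apply: Hle; exact: mem_head.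
- by apply: Hle; rewrite inE ys orbT.
Qed.

Lemma exists_cand (n : nat) (prec : rel 'I_n) (hprec : strict_partial_order prec)
  (U : seq 'I_n) x : x \in U -> exists2 j, j \in U & all (fun k => ~~ prec j k) U.
Proof.
move=> xU; case: hprec => irr tr.
pose c := fun j => count (fun a => prec a j) U.
case: (@arg_maxnP _ x (mem U) c xU) => j jU Hj.
exists j => //; apply/allP => k kU; apply/negP => pjk.
have := Hj k kU; rewrite /c => H.
have : (count (fun a => prec a j) U + count (pred1 j) U <= count (fun a => prec a k) U)%N.
  rewrite -count_predUI.
  have -> : count (predI (fun a => prec a j) (pred1 j)) U = 0%N.
    apply/eqP; rewrite -leqn0 -(count_pred0 U) leq_eqVlt; apply/orP; left.
    apply/eqP/eq_count => a /=; case: (a =P j) => [->|]; first by rewrite irr.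
    by rewrite andbF.
  rewrite addn0; apply: sub_count => a /= /orP [paj | /eqP ->] //.
  exact: tr paj pjk.
have : (0 < count (pred1 j) U)%N by rewrite -has_count; apply/hasP; exists j => //=.
move: H; lia.
Qed.

Lemma last_lb (R : realFieldType) (n K : nat) (prec : rel 'I_n)
  (p d w : 'I_K -> 'I_n -> R) (U s : seq 'I_n) :
  uniq U -> valid prec U s -> s != [::] ->
  exists l, [/\ l \in U, all (fun k => ~~ prec l k) U &
                last_cost p d w U l <= val p d w s].
Proof.
move=> uU [ps hs]; case/lastP: s ps hs => [|s' l] // ps hs _.
have us : uniq (rcons s' l) by rewrite (perm_uniq ps).
have lU : l \in U by rewrite -(perm_mem ps) mem_rcons mem_head.
have ls' : l \notin s' by move: us; rewrite rcons_uniq => /andP [].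
exists l; split => //.
  apply/allP => k kU; apply/negP => plk.
  have := hs l k lU kU plk.
  rewrite -cats1 !index_cat (negbTE ls') /= eqxx addn0.
  have : k \in s' ++ [:: l] by rewrite cats1 (perm_mem ps).
  rewrite mem_cat inE => /orP [ks | /eqP ->]; last by rewrite (negbTE ls') /= eqxx addn0 ltnn.
  by rewrite ks ltnNge ltnW // index_mem.
apply: (le_bmax (x := l)); first by rewrite mem_rcons mem_head.
  by [].
rewrite /Gv; under eq_bigr => i _ do rewrite compl_rcons_last //.
rewrite /last_cost; under eq_bigr => i _ do rewrite (perm_big _ ps).
exact: lexx.
Qed.

Lemma lawler_ok (R : realFieldType) (n K : nat) (prec : rel 'I_n)
  (hprec : strict_partial_order prec) (p d w : 'I_K -> 'I_n -> R)
  (hp : forall S j, 0 <= p S j) (hw : forall S j, 0 <= w S j) fuel :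
  forall U : seq 'I_n, uniq U -> (size U <= fuel)%N ->
  valid prec U (lawler_aux prec p d w fuel U) /\
  forall s, valid prec U s -> val p d w (lawler_aux prec p d w fuel U) <= val p d w s.
Proof.
have base : forall U : seq 'I_n, U = [::] -> valid prec U U /\
    forall s, valid prec U s -> val p d w U <= val p d w s.
  move=> U -> ; split; first by split.
  move=> s _; rewrite /val big_nil; exact: bmax_ge0.
elim: fuel => [|fuel IH] U uU szU.
  by apply: base; apply/eqP; rewrite -size_eq0 -leqn0.
rewrite /=.
case E: [seq j <- U | all (fun k => ~~ prec j k) U] => [|c cs].
  apply: base; case: U uU szU E => [|x U'] // _ _ E.
  have [j jU hj] := exists_cand hprec (mem_head x U').
  have : j \in [seq j <- x :: U' | all (fun k => ~~ prec j k) (x :: U')].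
    by rewrite mem_filter jU hj.
  by rewrite E.
set j := argmin_seq _ c cs.
have [jcc jmin] := argmin_seqP (last_cost p d w U) c cs.
have : j \in [seq j <- U | all (fun k => ~~ prec j k) U] by rewrite E.
rewrite mem_filter => /andP [jnp jU].
have uU' : uniq (rem j U) by exact: rem_uniq.
have szU' : (size (rem j U) <= fuel)%N by rewrite size_rem //; case: (size U) szU.
have [[pL hL] optL] := IH _ uU' szU'.
set L := lawler_aux prec p d w fuel (rem j U) in pL hL optL *.
have jU' : j \notin rem j U by rewrite mem_rem_uniqF.
have jL : j \notin L by rewrite (perm_mem pL).
have irr := proj1 hprec.
have permU : perm_eq (rcons L j) U.
  rewrite perm_rcons; apply: (@perm_trans _ (j :: rem j U)); last by rewrite perm_sym; exact: perm_to_rem jU.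
  by rewrite perm_cons.
split.
  split => // a b aU bU pab.
  rewrite -cats1 !index_cat.
  case: (b =P j) => [bj | /eqP bj].
    subst b; rewrite (negbTE jL) /= eqxx addn0.
    have aj : a != j by apply/eqP => aj; subst a; rewrite irr in pab.
    have aL : a \in L by rewrite (perm_mem pL) mem_rem_uniq // inE aj aU.
    by rewrite aL index_mem.
  case: (a =P j) => [aj | /eqP aj].
    by subst a; move/allP: jnp => /(_ b bU); rewrite pab.
  have aL : a \in L by rewrite (perm_mem pL) mem_rem_uniq // inE aj aU.
  have bL : b \in L by rewrite (perm_mem pL) mem_rem_uniq // inE bj bU.
  rewrite aL bL; apply: hL => //; by rewrite mem_rem_uniq // inE ?aj ?bj ?aU ?bU.
move=> s [ps hs].
have us : uniq s by rewrite (perm_uniq ps).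
have sne : s != [::].
  by apply/eqP => s0; move: jU; rewrite -(perm_mem ps) s0.
have [l [lU lnp llb]] := last_lb p d w uU (conj ps hs) sne.
have lcc : l \in c :: cs by rewrite -E mem_filter lnp lU.
have js : j \in s by rewrite (perm_mem ps).
have vt : valid prec (rem j U) (rem j s).
  split.
    rewrite -(perm_cons j); apply: (@perm_trans _ s); first by rewrite perm_sym; exact: perm_to_rem js.
    exact: (@perm_trans _ U _ _ ps (perm_to_rem jU)).
  move=> a b; rewrite !mem_rem_uniq // !inE => /andP [aj aU] /andP [bj bU] pab.
  by rewrite index_rem_lt //; apply: hs.
apply: val_rcons => //.
  apply: le_trans (optL _ vt) _; exact: val_rem.
apply: le_trans llb; apply: le_trans (jmin _ lcc).
rewrite /last_cost; under eq_bigr => i _ do rewrite (perm_big _ permU).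
exact: lexx.
Qed.

Lemma owa_le_max (R : realFieldType) (K : nat) (v f : 'I_K -> R)
  (hv : forall i, 0 <= v i) (hvsum : \sum_(i < K) v i = 1) :
  owa v f <= \big[Num.max/0]_(i < K) f i.
Proof.
rewrite /owa /=; set sf := sort _ _; set M := \big[Num.max/0]_(i < K) f i.
apply: le_trans (_ : \sum_(i < K) v i * M <= _).
  apply: ler_sum => i _; apply: ler_wpM2l => //.
  have : nth 0 sf i \in sf by apply: mem_nth; rewrite size_sort size_map size_enum_ord.
  rewrite mem_sort => /mapP [k _ ->].
  by apply: (le_bmax (x := k)); rewrite ?mem_index_enum.
by rewrite -mulr_suml hvsum mul1r.
Qed.

Lemma owa_ge (R : realFieldType) (K : nat) (v f : 'I_K -> R) (i0 : 'I_K)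
  (hi0 : nat_of_ord i0 = 0%N)
  (hv : forall i, 0 <= v i) (hf : forall i, 0 <= f i) :
  v i0 * \big[Num.max/0]_(i < K) f i <= owa v f.
Proof.
rewrite /owa /=; set sf := sort _ _.
have szsf : size sf = K by rewrite size_sort size_map size_enum_ord.
have nth0 : forall i, 0 <= nth 0 sf i.
  move=> i; case: (ltnP i (size sf)) => h; last by rewrite nth_default.
  by move: (mem_nth 0 h); rewrite mem_sort => /mapP [k _ ->].
rewrite [X in _ <= X](bigD1 i0) //= hi0.
apply: le_trans (_ : v i0 * nth 0 sf 0 <= _); last first.
  rewrite -[X in X <= _]addr0 lerD2l; apply: sumr_ge0 => i _.
  exact: mulr_ge0.
apply: ler_wpM2l => //; apply: bmax_le; first by [].
move=> k _ _.
have srt : sorted (fun x y : R => y <= x) sf.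
  by apply: sort_sorted => x y; exact: le_total.
have : f k \in sf by rewrite mem_sort; apply: map_f; rewrite mem_enum.
case: sf srt {szsf nth0} => [|a t] //= srt.
have := order_path_min (fun y x z (h1 : y <= x) (h2 : z <= y) => le_trans h2 h1) srt.
rewrite inE => /allP H /orP [/eqP -> // | kt].
exact: H.
Qed.

Lemma maxcost_val (R : realFieldType) (n K : nat) (p d w : 'I_K -> 'I_n -> R)
  (s : seq 'I_n) : perm_eq s (enum 'I_n) ->
  \big[Num.max/0]_(i < K) cost p d w s i = val p d w s.
Proof.
move=> ps; have js : forall j : 'I_n, j \in s by move=> j; rewrite (perm_mem ps) mem_enum.
apply/eqP; rewrite eq_le; apply/andP; split.
  apply: bmax_le; first exact: bmax_ge0.
  move=> i _ _; apply: bmax_le; first exact: bmax_ge0.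
  move=> j _ _; apply: (le_bmax (js j)) => //.
  by apply: (le_bmax (x := i)); rewrite ?mem_index_enum.
apply: bmax_le; first exact: bmax_ge0.
move=> j _ _; apply: bmax_le; first exact: bmax_ge0.
move=> i _ _; apply: (le_bmax (x := i)); rewrite ?mem_index_enum //.
by apply: (le_bmax (x := j)); rewrite ?mem_index_enum.
Qed.

Unset Implicit Arguments.

Theorem corollary1 (R : realFieldType) (n K : nat) (hK : (1 < K)%N)
  (prec : rel 'I_n) (hprec : strict_partial_order prec)
  (p d w : 'I_K -> 'I_n -> R)
  (hp : forall S j, 0 <= p S j) (hd : forall S j, 0 <= d S j)
  (hw : forall S j, 0 <= w S j)
  (v : 'I_K -> R) (hv : forall i, 0 <= v i <= 1) (hvsum : \sum_(i < K) v i = 1)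
  (hv1 : 0 < first_weight v) :
  is_schedule prec (lawler prec p d w) /\
  forall sigma : seq 'I_n, is_schedule prec sigma ->
    OWA v p d w (lawler prec p d w) <= (first_weight v)^-1 * OWA v p d w sigma.
Proof.
have hv0 : forall i, 0 <= v i by move=> i; case/andP: (hv i).
have [[pL hL] optL] := @lawler_ok R n K prec hprec p d w hp hw n (enum 'I_n) (enum_uniq 'I_n)
  (eq_leq (size_enum_ord n)).
have sched : is_schedule prec (lawler prec p d w) by split => // a b; apply: hL; rewrite mem_enum.
split => // sigma [ps hs].
have vs : valid prec (enum 'I_n) sigma by split => // a b _ _; apply: hs.
have hK0 : (0 < K)%N by apply: ltnW.
pose i0 : 'I_K := Ordinal hK0.
have fw : first_weight v = v i0.
  rewrite /first_weight (nth_map i0) ?size_enum_ord //; congr v; apply: val_inj.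
  by rewrite /= nth_enum_ord.
have cost0 : forall s i, 0 <= cost p d w s i by move=> s i; exact: bmax_ge0.
rewrite /OWA; apply: le_trans (owa_le_max _ hv0 hvsum) _.
rewrite maxcost_val; last by case: sched.
apply: le_trans (optL _ vs) _.
rewrite -maxcost_val // ler_pdivlMl // fw.
apply: owa_ge => //.
Qed.
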